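(* Let $T[1..n]$ be a text and $\tau\ge1$ an integer. Suppose the first $i-1$ factors of the LZ-End+$\tau$ factorization of $T$ have been determined and the next factor starts at position $s_i$. If the $\tau$-far property holds for an index $j>s_i$, then it holds for $j-1$.
   Context: LZ-End+$\tau$ factorization: processed left to right starting with $i=1$. If $T[i]$ does not occur in $T[1..i-1]$, make $T[i]$ a new factor and set $i\gets i+1$. Otherwise, let $j$ be the largest index such that $T[i..j]$ has an earlier occurrence $T[k-(j-i)..k]=T[i..j]$ with $k<i$ where either $k$ is the last position of an earlier factor or $k-1\equiv 0\pmod\tau$; make $T[i..j]$ the next factor and set $i\gets j+1$. Potential factor: $T[s_i..h]$ is a potential factor if either $h=s_i$ and $T[s_i]$ is the leftmost occurrence of its symbol in $T$, or $T[s_i..h]=T[x..y]$ for some $x\le y<s_i$ such that $y$ is the last position of one of the already determined factors or $y-1\equiv 0\pmod\tau$. $\tau$-far property: it holds for an index $j\ge s_i$ if there exists $h$ with $s_i\le h$ and $j-\tau\le h\le j$ such that $T[s_i..h]$ is a potential factor. *)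

(* Defs.v *)
(* Texts are sequences over an eqType alphabet;
   positions are 1-indexed as in the paper: T[p] = nth _ T (p-1). *)
From mathcomp Require Import all_boot.
Set Implicit Arguments. Unset Strict Implicit. Unset Printing Implicit Defensive.

Section LZEnd.
Variable A : eqType.

(* T[a..b] (1-indexed, inclusive) *)
Definition tsub (T : seq A) (a b : nat) : seq A := take (b.+1 - a) (drop a.-1 T).

Definition fresh_at (T : seq A) (p : nat) : bool :=
  ~~ has (fun q => tsub T q q == tsub T p p) (iota 1 p.-1).

(* k is an admissible source end: last position of an already determined
   factor (k \in E) or k-1 = 0 mod tau *)
Definition src_end (tau : nat) (E : seq nat) (k : nat) : bool :=
  (k \in E) || (k.-1 %% tau == 0).

Definition ext_ok (T : seq A) (tau : nat) (E : seq nat) (i j : nat) : bool :=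
  has (fun k => [&& j - i < k, src_end tau E k & tsub T (k - (j - i)) k == tsub T i j])
      (iota 1 i.-1).

Definition fend (T : seq A) (tau : nat) (E : seq nat) (i : nat) : nat :=
  if fresh_at T i then i
  else last i (filter (ext_ok T tau E i) (iota i ((size T).+1 - i))).

Fixpoint lzends (T : seq A) (tau fuel : nat) (E : seq nat) (i : nat) : seq nat :=
  if fuel is f.+1 then
    if i <= size T then
      let j := fend T tau E i in j :: lzends T tau f (rcons E j) j.+1
    else [::]
  else [::].

(* LZ-End+tau factorization of T, given as the list of factor end positions *)
Definition lzend_tau (T : seq A) (tau : nat) : seq nat :=
  lzends T tau (size T) [::] 1.

Definition potential_factor (T : seq A) (tau : nat) (E : seq nat) (s h : nat) : Prop :=
  h <= size T /\
  ((h = s /\ fresh_at T s) \/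
   exists x y, [/\ 1 <= x, x <= y, y < s, tsub T s h = tsub T x y & src_end tau E y]).

Definition tau_far (T : seq A) (tau : nat) (E : seq nat) (s j : nat) : Prop :=
  exists h, [/\ s <= h, j - tau <= h, h <= j & potential_factor T tau E s h].

End LZEnd.

(* Main.v *)
Require Import Defs.
From mathcomp Require Import all_boot.
From mathcomp Require Import zify.

Section Aux.
Variable A : eqType.
Implicit Types T : seq A.

Lemma tsub_pre T a b d : a <= b -> d <= b - a -> tsub T a (a + d) = take d.+1 (tsub T a b).
Proof.
move=> hab hd; rewrite /tsub take_takel; last by lia.
by have -> : (a + d).+1 - a = d.+1 by lia.
Qed.

Lemma tsub_pt T a b t : 1 <= a -> a <= b -> t <= b - a ->
  tsub T (a + t) (a + t) = take 1 (drop t (tsub T a b)).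
Proof.
move=> ha hab ht; rewrite /tsub.
have -> : (a + t).+1 - (a + t) = 1 by lia.
have -> : (a + t).-1 = t + a.-1 by lia.
rewrite -drop_drop.
have -> : b.+1 - a = (b.+1 - a - t) + t by lia.
rewrite -take_drop take_takel //; lia.
Qed.

Lemma size_tsub T a b : 1 <= a -> a <= b.+1 -> b <= size T -> size (tsub T a b) = b.+1 - a.
Proof. move=> h1 h2 h3; rewrite /tsub size_take_min size_drop; lia. Qed.

Lemma fend_fresh T tau E0 i0 p : 1 <= i0 -> i0 <= p -> p <= fend T tau E0 i0 ->
  fresh_at T p -> p = fend T tau E0 i0.
Proof.
move=> h1 h2; rewrite /fend; case: ifP => Hf; first by lia.
set j := last _ _ => hpj Hp.
have : j \in i0 :: filter (ext_ok T tau E0 i0) (iota i0 ((size T).+1 - i0)) by apply: mem_last.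
rewrite in_cons => /orP [/eqP ej|].
  have ep : p = i0 by lia.
  by move: Hf; rewrite -ep Hp.
rewrite mem_filter => /andP [/hasP [k hk /and3P [hk1 _ /eqP heq]] _].
case: (eqVneq p i0) => [ep|np]; first by move: Hf; rewrite -ep Hp.
move: Hp; rewrite /fresh_at => /negP; case; apply/hasP.
rewrite mem_iota in hk.
exists ((k - (j - i0)) + (p - i0)).
  rewrite mem_iota; lia.
rewrite (tsub_pt T _ k); [|lia|lia|lia].
rewrite heq -tsub_pt; [|lia|lia|lia].
by have -> : i0 + (p - i0) = p by lia.
Qed.

Lemma lz_struct T tau fuel : forall E0 i0 k p, 1 <= i0 -> i0 <= p ->
  p <= last i0.-1 (take k (lzends T tau fuel E0 i0)) -> fresh_at T p ->
  p \in take k (lzends T tau fuel E0 i0).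
Proof.
elim: fuel => [|f IH] E0 i0 k p h1 h2 /=.
  lia.
case: ifP => hs; last by case: k => /= [|k]; lia.
case: k => [|k] /=; first by lia.
set j := fend T tau E0 i0 => hl hf.
rewrite in_cons; case: (leqP p j) => hpj.
  by rewrite /j -(@fend_fresh T tau E0 i0 p h1 h2 hpj hf) eqxx.
apply/orP; right; apply: IH => //.
Qed.

End Aux.

Theorem lemma4 (A : eqType) (T : seq A) (tau : nat) (htau : 1 <= tau)
  (i : nat) (hi : 1 <= i <= size (lzend_tau T tau)) (j : nat) :
  let E := take i.-1 (lzend_tau T tau) in
  let s := (last 0 E).+1 in
  s < j -> tau_far T tau E s j -> tau_far T tau E s j.-1.
Proof.
move=> E s hsj [h [hsh hjh hhj hpf]].
case: (ltnP h j) => hhj'.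
  exists h; split => //; lia.
have ehj : h = j by lia.
subst h.
case: hpf => hsize [[ehs _]|[x [y [h1x hxy hys heq hsrc]]]]; first by lia.
have hsz : y - x = j - s.
  have := size_tsub A T s j; have := size_tsub A T x y.
  rewrite heq; lia.
case: (leqP (j.-1 - tau) s) => hc.
  exists s; split => //; try lia.
  split; first by lia.
  right.
  have hx : tsub T x x = tsub T s s.
    have := tsub_pre A T x y 0; rewrite addn0 => -> //; try lia.
    have := tsub_pre A T s j 0; rewrite addn0 heq => -> //; lia.
  have exq : exists q, (1 <= q) && (tsub T q q == tsub T s s).
    by exists x; rewrite h1x hx eqxx.
  case: (ex_minnP exq) => m /andP [h1m /eqP hm] hmin.
  have hmx : m <= x by apply: hmin; rewrite h1x hx eqxx.
  have hfresh : fresh_at T m.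
    rewrite /fresh_at; apply/hasP => [[q]]; rewrite mem_iota => hq /eqP hqm.
    have := hmin q; rewrite hqm hm eqxx andbT.
    have -> : 1 <= q by lia.
    move=> /(_ isT); lia.
  have hmE : m \in E.
    apply: (@lz_struct A T tau (size T) [::] 1 i.-1 m) => //.
    have hm' : m < s by lia.
    move: hm'; rewrite /s /E /lzend_tau /=; lia.
  exists m, m; split => //; first by lia.
  by rewrite /src_end hmE.
set r := (y - 2) %% tau.
set q := (y - 2) %/ tau.
have hdq : y - 2 = q * tau + r by rewrite /q /r -divn_eq.
have hr : r < tau by rewrite /r ltn_mod; lia.
set y' := y.-1 - r.
exists (s + (y' - x)); split; try lia.
split; first by lia.
right; exists x, y'; split; try lia.
  rewrite (tsub_pre A T _ j); [|lia|lia].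
  rewrite heq -tsub_pre; [|lia|lia].
  by have -> : x + (y' - x) = y' by lia.
rewrite /src_end; apply/orP; right.
have -> : y'.-1 = q * tau by lia.
by rewrite modnMl.
Qed.
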